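(* Let $q$ be a prime power and let $C\subseteq \mathrm{GF}(q^m)^n$ be a (linear or nonlinear) code with $n\le m$, $|C|=q^{mk}$ for an integer $1\le k\le n$, and minimum rank distance $d_{\mathrm R}=n-k+1$. Let $r=n-k$ and $t=\lfloor (d_{\mathrm R}-1)/2\rfloor$. Then for every transmitted codeword $\mathbf c\in C$ and every integer $u$ with $d_{\mathrm R}-t\le u\le n$, the decoder error probability of the bounded rank distance decoder satisfies $$P_E(t;u)<\frac{q^{-t^2}}{K_q^{2}},\qquad\text{where } K_q=\prod_{j=1}^{\infty}(1-q^{-j}).$$
   Context: For $\mathbf x=(x_0,\dots,x_{n-1})\in\mathrm{GF}(q^m)^n$, the rank $\mathrm{rk}(\mathbf x)$ is the dimension over $\mathrm{GF}(q)$ of the $\mathrm{GF}(q)$-span of $x_0,\dots,x_{n-1}$ (equivalently, the rank of the $m\times n$ matrix over $\mathrm{GF}(q)$ obtained by expanding each coordinate in a fixed basis of $\mathrm{GF}(q^m)$ over $\mathrm{GF}(q)$). The rank distance is $d(\mathbf x,\mathbf y)=\mathrm{rk}(\mathbf x-\mathbf y)$, and the minimum rank distance of $C$ is the minimum of $\mathrm{rk}(\mathbf c-\mathbf d)$ over distinct $\mathbf c,\mathbf d\in C$. A codeword $\mathbf c$ is transmitted and $\mathbf y=\mathbf c+\mathbf e$ is received. The bounded rank distance decoder outputs the codeword $\mathbf c'\in C$ with $\mathrm{rk}(\mathbf y-\mathbf c')\le t$ if one exists (it is then unique), and declares a decoder failure otherwise. A decoder error occurs when it outputs a codeword $\mathbf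 c'\neq\mathbf c$. For $0\le u\le n$, $P_E(t;u)$ is the probability of decoder error when the error $\mathbf e$ is uniformly distributed over the set of vectors of $\mathrm{GF}(q^m)^n$ of rank exactly $u$. *)

(* Defs.v *)
From HB Require Import structures.
From mathcomp Require Import all_boot all_order all_algebra.
From mathcomp Require Import all_classical all_reals all_analysis.
Set Implicit Arguments. Unset Strict Implicit. Unset Printing Implicit Defensive.
Import Order.TTheory GRing.Theory Num.Theory numFieldNormedType.Exports.
Local Open Scope ring_scope.

(* A vector x in GF(q^m)^n is represented by its m x n expansion matrix over
   GF(q) = K (each coordinate expanded in a fixed GF(q)-basis of GF(q^m)). *)
Definition rk (K : fieldType) (m n : nat) (x : 'M[K]_(m, n)) : nat := \rank x.

Definition min_rank_dist (K : finFieldType) (m n : nat)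
  (C : {set 'M[K]_(m, n)}) (d : nat) : Prop :=
  (forall c c', c \in C -> c' \in C -> c != c' -> (d <= rk (c - c'))%N) /\
  (exists c c', [/\ c \in C, c' \in C, c != c' & rk (c - c') = d]).

(* Decoder error event for the bounded rank distance decoder with radius t:
   c transmitted, y = c + e received; the decoder outputs some codeword
   c' <> c with rk(y - c') <= t. *)
Definition dec_error (K : finFieldType) (m n : nat)
  (C : {set 'M[K]_(m, n)}) (t : nat) (c e : 'M[K]_(m, n)) : bool :=
  [exists c' in C, (c' != c) && (rk (c + e - c') <= t)%N].

(* P_E(t;u) for transmitted codeword c: error uniform over rank-u vectors. *)
Definition PE (R : realType) (K : finFieldType) (m n : nat)
  (C : {set 'M[K]_(m, n)}) (c : 'M[K]_(m, n)) (t u : nat) : R :=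
  (#|[set e : 'M[K]_(m, n) | (rk e == u) && dec_error C t c e]|%:R
   / #|[set e : 'M[K]_(m, n) | rk e == u]|%:R).

Definition Kq (R : realType) (q : nat) : R :=
  let P : R^nat := fun N => \prod_(1 <= j < N.+1) (1 - (q%:R ^- j)) in
  limn P.

(* Main.v *)
Require Import Defs.
From HB Require Import structures.
From mathcomp Require Import all_boot all_order all_algebra.
From mathcomp Require Import all_classical all_reals all_analysis.
From mathcomp Require Import zify ring lra.
Import Order.TTheory GRing.Theory Num.Theory numFieldNormedType.Exports.
Local Open Scope ring_scope.

Section Comb.
Variable K : finFieldType.

Lemma rank_unitl m n (M : 'M[K]_m) (A : 'M[K]_(m, n)) :
  M \in unitmx -> \rank (M *m A) = \rank A.
Proof.
move=> uM; rewrite -mxrank_tr trmx_mul mxrankMfree ?mxrank_tr //.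
by rewrite row_free_unit unitmx_tr.
Qed.

Lemma rank_unitr m n (P : 'M[K]_n) (A : 'M[K]_(m, n)) :
  P \in unitmx -> \rank (A *m P) = \rank A.
Proof. by move=> uP; rewrite mxrankMfree // row_free_unit. Qed.

Lemma rank_unitlr m n (M : 'M[K]_m) (A : 'M[K]_(m, n)) (P : 'M[K]_n) :
  M \in unitmx -> P \in unitmx -> \rank (M *m A *m P) = \rank A.
Proof. by move=> uM uP; rewrite rank_unitr // rank_unitl. Qed.

Lemma card_fiber_sum (T U : finType) (S : {set T}) (g : T -> U) (B : {set U}) :
  #|[set x in S | g x \in B]| = (\sum_(y in B) #|[set x in S | g x == y]|)%N.
Proof.
rewrite -sum1_card (partition_big g (mem B)) /=; last first.
  by move=> x; rewrite inE => /andP[].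
apply: eq_bigr => y yB; rewrite -sum1_card; apply: eq_bigl => x.
rewrite !inE; case: (x \in S) => //=; by case: (g x =P y) => [->|]; rewrite ?yB ?andbF.
Qed.
Arguments card_fiber_sum {T U}.


Definition GLs a := [set M : 'M[K]_a | M \in unitmx].

Section Dims.
Variables m n : nat.

Definition Hs := finset.setX (GLs m) (GLs n).
Definition act (e : 'M[K]_(m, n)) (h : 'M[K]_m * 'M[K]_n) := h.1 *m e *m h.2.

Lemma equiv_rank (A B : 'M[K]_(m, n)) : \rank A = \rank B ->
  exists M P, [/\ M \in unitmx, P \in unitmx & B = M *m A *m P].
Proof.
move=> rAB.
exists (col_ebase B *m invmx (col_ebase A)), (invmx (row_ebase A) *m row_ebase B).
split; rewrite ?unitmx_mul ?unitmx_inv ?col_ebase_unit ?row_ebase_unit //.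
have eA := mulmx_ebase A; have eB := mulmx_ebase B.
have u1 := col_ebase_unit A; have u2 := row_ebase_unit A.
set cA := col_ebase A in eA u1 *; set rA := row_ebase A in eA u2 *.
set cB := col_ebase B in eB *; set rB := row_ebase B in eB *.
rewrite -{1}eB -eA rAB !mulmxA.
by rewrite mulmxKV // mulmxK.
Qed.

Lemma inHs h : (h \in Hs) = (h.1 \in unitmx) && (h.2 \in unitmx).
Proof. by rewrite !inE. Qed.

Lemma fiber_const e y : \rank y = \rank e ->
  #|[set h in Hs | act e h == y]| = #|[set h in Hs | act e h == e]|.
Proof.
move=> rye; have [M0 [P0 [uM uP ->]]] := @equiv_rank e y (esym rye).
pose g (h : 'M[K]_m * 'M[K]_n) := (M0 *m h.1, h.2 *m P0).
have ginj : injective g.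
  move=> [a b] [a' b'] [/= e1 e2].
  by rewrite -(mulKmx uM a) e1 mulKmx // -(mulmxK uP b) e2 mulmxK.
suff -> : [set h in Hs | act e h == M0 *m e *m P0] =
    g @: [set h in Hs | act e h == e] by rewrite card_imset.
apply/setP => h.
rewrite !inE; apply/andP/imsetP.
  case=> /andP[u1 u2] /eqP he.
  exists (invmx M0 *m h.1, h.2 *m invmx P0).
    rewrite !inE /= !unitmx_mul !unitmx_inv u1 u2 uM uP /=.
    apply/eqP; rewrite /act /=.
    transitivity (invmx M0 *m (h.1 *m e *m h.2) *m invmx P0); first by rewrite !mulmxA.
    by rewrite [h.1 *m e *m h.2]he -!mulmxA mulKmx // mulmxV // mulmx1.
  by case: h {he u1 u2} => a b; rewrite /g /= mulmxA mulmxV // mul1mx -mulmxA mulVmx // mulmx1.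
case=> [[a b]]; rewrite !inE /= => /andP[/andP[ua ub] /eqP hab] ->.
rewrite /g /= !unitmx_mul ua ub uM uP /=; split=> //; apply/eqP.
rewrite /act /= in hab *; by rewrite -[in RHS]hab !mulmxA.
Qed.

Lemma act_rank e h : h \in Hs -> \rank (act e h) = \rank e.
Proof. by rewrite inHs => /andP[u1 u2]; rewrite /act rank_unitlr. Qed.

Lemma orbit_count e (S : {set 'M[K]_(m, n)}) :
  {in S, forall y, \rank y = \rank e} ->
  #|[set h in Hs | act e h \in S]| = (#|S| * #|[set h in Hs | act e h == e]|)%N.
Proof.
move=> hS; rewrite card_fiber_sum -sum_nat_const.
by apply: eq_bigr => y yS; rewrite fiber_const ?hS.
Qed.

Lemma Hs_count e :
  #|Hs| = (#|[set y : 'M[K]_(m, n) | \rank y == \rank e]| *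
           #|[set h in Hs | act e h == e]|)%N.
Proof.
rewrite -orbit_count; last by move=> y; rewrite inE => /eqP.
apply: eq_card => h; rewrite !inE.
case hH: (_ && _) => //=; by rewrite act_rank ?eqxx // inHs hH.
Qed.

End Dims.
Arguments act {m n}.
Arguments orbit_count {m n}.
Arguments Hs_count {m n}.
Arguments act_rank {m n}.
Arguments fiber_const {m n}.

Lemma sum_delta p (f : 'I_p -> K) (j0 : 'I_p) (b : 'I_p -> bool) :
  \sum_(j < p) f j * ((j == j0) && b j)%:R = f j0 * (b j0)%:R.
Proof.
rewrite (bigD1 j0) //= eqxx big1 ?addr0 // => j /negbTE ->.
by rewrite mulr0.
Qed.

Definition Sel m r : 'M[K]_(m, m - r) := \matrix_(i < m, j < m - r) ((i : nat) == (r + j)%N)%:R.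

Lemma selK m r (N : 'M[K]_m) : N *m Sel m r = 0 -> N = N *m pid_mx r.
Proof.
move=> hN; apply/matrixP => i k; rewrite !mxE.
under eq_bigr => j _ do rewrite mxE.
rewrite (@sum_delta m (fun j => N i j) k (fun j => (j < r)%N)).
case: (ltnP k r) => hkr; first by rewrite mulr1.
rewrite mulr0.
have hk : (k - r < m - r)%N by rewrite ltn_sub2r // (leq_ltn_trans hkr).
have := congr1 (fun A : 'M[K]_(m, m - r) => A i (Ordinal hk)) hN; rewrite !mxE => <-.
rewrite (bigD1 k) //= !mxE /= subnKC // eqxx mulr1 big1 ?addr0 // => j hj.
rewrite mxE /= subnKC //; case: eqP => [hjk|]; last by rewrite mulr0.
by move: hj; rewrite -val_eqE /= hjk eqxx.
Qed.


Section Singleton.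
Variables (m n r : nat) (C : {set 'M[K]_(m, n)}) (c : 'M[K]_(m, n)).
Hypothesis hdist : forall x x' : 'M[K]_(m, n), c + x \in C -> c + x' \in C ->
  x != x' -> (r < \rank (x - x')%R)%N.
Hypothesis hnz : forall x : 'M[K]_(m, n), c + x \in C -> x != 0 -> (r < \rank x)%N.
Hypothesis hrm : (r <= m)%N.

Lemma singleton (y : 'M[K]_(m, n)) (P : 'M[K]_n) : P \in unitmx ->
  (#|[set M : 'M[K]_m | ((c + M *m y *m P)%R \in C) && (M *m y *m P != 0)%R]|
    <= #|K| ^ (m * (m - r)))%N.
Proof.
move=> uP.
set S := [set M : 'M[K]_m | _].
case: (leqP (\rank y) r) => [hyr | hry].
  suff -> : S = finset.set0 by rewrite cards0.
  apply/setP => M; rewrite !inE; apply/negP => /andP[h1 h2].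
  have := hnz _ h1 h2; rewrite ltnNge.
  by rewrite (leq_trans (mxrankM_maxl _ _)) // (leq_trans (mxrankM_maxr _ _)).
pose E := col_ebase y; pose F := row_ebase y; pose w := \rank y.
have ey : y = E *m pid_mx w *m F by rewrite mulmx_ebase.
pose phi (M : 'M[K]_m) := M *m E *m Sel m r.
have phi_inj : {in S &, injective phi}.
  move=> M1 M2; rewrite !inE => /andP[h11 h12] /andP[h21 h22] hphi.
  pose N := (M1 - M2) *m E.
  have hN : N *m Sel m r = 0 by rewrite /N !mulmxBl -/(phi M1) hphi subrr.
  have NK := selK _ _ _ hN.
  have hwn : (w <= n)%N by rewrite rank_leq_col.
  have hdiff : M1 *m y *m P - M2 *m y *m P = N *m (pid_mx r : 'M[K]_m) *m pid_mx w *m F *m P.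
    rewrite -!mulmxBl -NK /N ey !mulmxA //.
  have heq : M1 *m y *m P = M2 *m y *m P.
    apply/eqP; apply/negPn/negP => hne.
    have := hdist _ _ h11 h21 hne; rewrite hdiff ltnNge.
    rewrite (leq_trans (mxrankM_maxl _ _)) // (leq_trans (mxrankM_maxl _ _)) //.
    rewrite (leq_trans (mxrankM_maxl _ _)) // (leq_trans (mxrankM_maxr _ _)) //.
    by rewrite rank_pid_mx.
  have h0 : N *m (pid_mx w : 'M[K]_(m, n)) = 0.
    have : N *m (pid_mx w : 'M[K]_(m, n)) *m (F *m P) = 0.
      by rewrite {1}NK !mulmxA -hdiff heq subrr.
    move/(congr1 (mulmx^~ (invmx (F *m P)))).
    by rewrite mul0mx mulmxK ?unitmx_mul ?row_ebase_unit ?uP.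
  have hN0 : N = 0.
    rewrite NK -(_ : (pid_mx w : 'M[K]_(m, n)) *m (pid_mx r : 'M[K]_(n, m)) = pid_mx r).
      by rewrite mulmxA h0 mul0mx.
    rewrite mul_pid_mx; congr pid_mx.
    by rewrite (minn_idPr (ltnW hry)) (minn_idPr (leq_trans (ltnW hry) hwn)).
  apply/eqP; rewrite -subr_eq0; apply/eqP.
  move: hN0 => /(congr1 (mulmx^~ (invmx E))); rewrite mul0mx /N mulmxK //.
  exact: col_ebase_unit.
rewrite -(card_in_imset phi_inj).
by rewrite (leq_trans (max_card _)) // card_mx.
Qed.

End Singleton.


Lemma ball_bound m n t : (t <= n)%N ->
  (#|[set z : 'M[K]_(m, n) | \rank z <= t]| * #|GLs t|
     <= #|K| ^ (m * t) * #|K| ^ (t * n))%N.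
Proof.
move=> htn.
pose Az (z : 'M[K]_(m, n)) : 'M[K]_(m, t) := col_ebase z *m pid_mx (\rank z).
pose Rz (z : 'M[K]_(m, n)) : 'M[K]_(t, n) := pid_mx t *m row_ebase z.
have hAR z : (\rank z <= t)%N -> Az z *m Rz z = z.
  move=> hz; rewrite /Az /Rz mulmxA -(mulmxA (col_ebase z)) mul_pid_mx.
  rewrite (minn_idPl hz) (minn_idPr hz).
  exact: mulmx_ebase.
have hRinv z : Rz z *m (invmx (row_ebase z) *m pid_mx t) = 1%:M.
  rewrite /Rz mulmxA mulmxK ?row_ebase_unit // mul_pid_mx minnn.
  by rewrite (minn_idPr htn) pid_mx_1.
pose psi (p : 'M[K]_(m, n) * 'M[K]_t) := (Az p.1 *m invmx p.2, p.2 *m Rz p.1).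
set B := [set z | _].
have psi_inj : {in finset.setX B (GLs t) &, injective psi}.
  move=> [z S] [z' S']; rewrite !inE /= => /andP[hz uS] /andP[hz' uS'] [e1 e2].
  have ez (x : 'M[K]_(m, n)) (T : 'M[K]_t) : T \in unitmx -> (\rank x <= t)%N ->
      x = (Az x *m invmx T) *m (T *m Rz x).
    by move=> uT hx; rewrite mulmxA mulmxKV // hAR.
  have ezz : z = z' by rewrite (ez z S uS hz) (ez z' S' uS' hz') e1 e2.
  subst z'; congr (_, _).
  have := congr1 (fun X => X *m (invmx (row_ebase z) *m (pid_mx t : 'M[K]_(n, t)))) e2.
  by rewrite /= -(mulmxA S) -(mulmxA S') hRinv !mulmx1.
rewrite -cardsX -(card_in_imset psi_inj).
by rewrite (leq_trans (max_card _)) // card_prod !card_mx.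
Qed.


Lemma card_GLs a :
  #|GLs a| = (#|K| ^ 'C(a, 2) * \prod_(1 <= i < a.+1) (#|K| ^ i - 1))%N.
Proof.
case: a => [|a].
  rewrite big_geq // muln1 bin_small // expn0.
  apply/eqP; rewrite eqn_leq; apply/andP; split.
    by rewrite (leq_trans (max_card _)) // card_mx.
  apply/card_gt0P; exists 1%:M; by rewrite inE unitmx1.
rewrite -card_GL //; rewrite cardsT /= card_sub; apply: eq_card => A.
by rewrite !inE.
Qed.


Lemma card_union_bound (T I : finType) (S : {set T}) (J : {set I})
    (F : I -> {set T}) :
  S \subset \bigcup_(i in J) F i -> (#|S| <= \sum_(i in J) #|F i|)%N.
Proof.
move=> sub; apply: leq_trans (subset_leq_card sub) _.
elim/big_rec2: _ => [|i U s _ IH]; first by rewrite cards0.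
by rewrite (leq_trans (leq_card_setU _ _).1) // leq_add2l.
Qed.

Lemma card_pair_bound m n (p : 'M[K]_m -> 'M[K]_n -> bool) (b : nat) :
  (forall P, P \in unitmx -> #|[set M | p M P]| <= b)%N ->
  (#|[set h in Hs m n | p h.1 h.2]| <= #|GLs n| * b)%N.
Proof.
move=> hb.
have := card_fiber_sum [set h in Hs m n | p h.1 h.2] snd (GLs n).
have -> : [set x in [set h in Hs m n | p h.1 h.2] | x.2 \in GLs n] =
          [set h in Hs m n | p h.1 h.2].
  apply/setP => h; rewrite !inE; by case: (h.1 \in unitmx); case: (h.2 \in unitmx); rewrite /= ?andbT ?andbF.
move=> ->; rewrite -sum_nat_const leq_sum // => P; rewrite inE => uP.
apply: leq_trans (hb P uP).
have inj : {in [set x in [set h in Hs m n | p h.1 h.2] | x.2 == P] &, injective fst}.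
  move=> [a b1] [a' b2]; rewrite !inE /= => /andP[_ /eqP ->] /andP[_ /eqP ->] /= ->.
  by [].
rewrite -(card_in_imset inj); apply: subset_leq_card; apply/fintype.subsetP => M.
case/imsetP => -[a b1]; rewrite !inE /= => /andP[/andP[_ hp] /eqP eb] ->.
by rewrite -eb.
Qed.


Section Main.
Variables (m n r t u : nat) (C : {set 'M[K]_(m, n)}) (c : 'M[K]_(m, n)).
Hypothesis hdist : forall x x' : 'M[K]_(m, n), c + x \in C -> c + x' \in C ->
  x != x' -> (r < \rank (x - x')%R)%N.
Hypothesis hnz : forall x : 'M[K]_(m, n), c + x \in C -> x != 0 -> (r < \rank x)%N.
Hypothesis hrm : (r <= m)%N.
Hypothesis htn : (t <= n)%N.
Hypothesis hun : (u <= n)%N.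
Hypothesis hnm : (n <= m)%N.

Definition badp (e : 'M[K]_(m, n)) :=
  [exists c' in C, (c' != c) && (\rank (c + e - c')%R <= t)%N].

Lemma GLs_gt0 a : (0 < #|GLs a|)%N.
Proof. by apply/card_gt0P; exists 1%:M; rewrite inE unitmx1. Qed.

Lemma main_count :
  (#|[set e : 'M[K]_(m, n) | (\rank e == u) && badp e]| * #|GLs m| * #|GLs t|
   <= #|[set e : 'M[K]_(m, n) | \rank e == u]| *
      (#|K| ^ (m * t) * #|K| ^ (t * n) * #|K| ^ (m * (m - r))))%N.
Proof.
pose e0 : 'M[K]_(m, n) := pid_mx u.
have re0 : \rank e0 = u by rewrite rank_pid_mx // (leq_trans hun hnm).
set Bad := [set e | _]; set RU := [set e | _].
set f0 := #|[set h in Hs m n | act e0 h == e0]|.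
have W1 : #|[set h in Hs m n | act e0 h \in Bad]| = (#|Bad| * f0)%N.
  by apply: orbit_count => y; rewrite inE re0 => /andP[/eqP].
have H1 : #|Hs m n| = (#|RU| * f0)%N by rewrite (Hs_count e0) re0.
have H2 : #|Hs m n| = (#|GLs m| * #|GLs n|)%N by rewrite /Hs cardsX.
pose Bt := [set z : 'M[K]_(m, n) | (\rank z <= t)%N].
pose Q z (h : 'M[K]_m * 'M[K]_n) :=
  (c + act (e0 + z) h \in C) && (act (e0 + z) h != 0).
set X := (#|K| ^ (m * (m - r)))%N.
have U1 : (#|[set h in Hs m n | act e0 h \in Bad]|
           <= \sum_(z in Bt) #|[set h in Hs m n | Q z h]|)%N.
  apply: card_union_bound; apply/fintype.subsetP => h; rewrite !inE.
  case/andP => hH /andP[_ /existsP[c' /and3P[c'C c'c hrk]]].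
  move: hH => /andP[u1 u2].
  pose z := invmx h.1 *m (c' - c) *m invmx h.2 - e0.
  apply/bigcupP; exists z.
    rewrite inE.
    have -> : z = invmx h.1 *m (- (c + act e0 h - c')) *m invmx h.2.
      rewrite /z opprB opprD addrA /act !mulmxBr !mulmxBl.
      by rewrite !mulmxA mulVmx // mul1mx mulmxK.
    by rewrite rank_unitlr ?unitmx_inv // mxrank_opp.
  have ha : act (e0 + z) h = c' - c.
    by rewrite /act /z addrC subrK !mulmxA mulmxV // mul1mx mulmxKV.
  rewrite !inE u1 u2 /Q ha addrC subrK c'C /= subr_eq0 //.
have U2 : (\sum_(z in Bt) #|[set h in Hs m n | Q z h]| <= #|Bt| * (#|GLs n| * X))%N.
  rewrite -sum_nat_const leq_sum // => z _.
  apply: (@card_pair_bound m n (fun M P => Q z (M, P))) => P uP.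
  exact: singleton hdist hnz hrm (e0 + z) P uP.
have key : (#|Bad| * #|GLs m| * #|GLs n| <= #|RU| * #|Bt| * X * #|GLs n|)%N.
  have := leq_trans (eq_leq (esym W1)) (leq_trans U1 U2).
  move/(leq_mul (leqnn #|RU|)).
  rewrite mulnCA -H1 H2 => h.
  apply: (leq_trans _ (leq_trans h _)); first by rewrite !mulnA.
  lia.
rewrite leq_pmul2r ?GLs_gt0 // in key.
have hb := @ball_bound m n t htn.
set a1 := #|Bad| in key *; set a2 := #|GLs m| in key *; set a3 := #|GLs t| in hb *.
set a4 := #|RU| in key *; set a5 := #|Bt| in key hb *.
set a6 := (#|K| ^ (m * t) * #|K| ^ (t * n))%N in hb *.
have := leq_mul key (leqnn a3); have := leq_mul hb (leqnn (a4 * X)).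
move=> h1 h2; apply: (leq_trans h2).
have -> : (a4 * a5 * X * a3 = a5 * a3 * (a4 * X))%N by lia.
apply: (leq_trans h1); apply: eq_leq; lia.
Qed.

End Main.

End Comb.

Section Anal.
Variable R : realType.
Variable q : nat.
Hypothesis hq : (2 <= q)%N.

Definition piq (N : nat) : R := \prod_(1 <= j < N.+1) (1 - (q%:R ^- j)).

Lemma piqS N : piq N.+1 = piq N * (1 - q%:R ^- N.+1).
Proof. by rewrite /piq big_nat_recr. Qed.

Let a : R := q%:R^-1.

Lemma qa j : (q%:R ^- j : R) = a ^+ j.
Proof. by rewrite /a exprVn. Qed.

Lemma a_gt0 : 0 < a.
Proof. by rewrite /a invr_gt0 ltr0n; case: q hq. Qed.

Lemma a_le : a <= 1/2.
Proof.
rewrite /a mul1r lef_pV2 ?posrE ?ltr0n //; last by case: q hq.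
by rewrite ler_nat.
Qed.

Lemma aX_ge0 j : 0 <= a ^+ j.
Proof. by rewrite exprn_ge0 // ltW // a_gt0. Qed.

Lemma aX_le1 j : a ^+ j <= 1.
Proof. by rewrite exprn_ile1 // ?(ltW a_gt0) //; have := a_le; lra. Qed.

Lemma aX_le j : a ^+ j <= (1/2) ^+ j.
Proof. by rewrite lerXn2r ?nnegrE ?(ltW a_gt0) ?a_le //; lra. Qed.

Lemma piq_ge0 N : 0 <= piq N.
Proof.
elim: N => [|N IH]; first by rewrite /piq big_geq.
by rewrite piqS mulr_ge0 // qa subr_ge0 aX_le1.
Qed.

Lemma piq_gt0 N : 0 < piq N.
Proof.
elim: N => [|N IH]; first by rewrite /piq big_geq.
rewrite piqS mulr_gt0 // qa subr_gt0 exprSr.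
have h1 := aX_le1 N; have h2 := a_le; have h3 := aX_ge0 N.
have : a ^+ N * a <= a by rewrite ler_piMl // (ltW a_gt0).
lra.
Qed.

Lemma piq_le1 N : piq N <= 1.
Proof.
elim: N => [|N IH]; first by rewrite /piq big_geq.
rewrite piqS; apply: le_trans IH.
by rewrite ler_piMr ?piq_ge0 // qa lerBlDr lerDl aX_ge0.
Qed.

Lemma piq_nonincr : nonincreasing_seq piq.
Proof.
apply/nonincreasing_seqP => N.
by rewrite piqS ler_piMr ?piq_ge0 // qa lerBlDr lerDl aX_ge0.
Qed.

Lemma piq_lt N : piq N.+1 < piq N.
Proof.
rewrite piqS -subr_gt0 -{1}(mulr1 (piq N)) -mulrBr mulr_gt0 ?piq_gt0 //.
by rewrite opprB addrC subrK qa exprn_gt0 // a_gt0.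
Qed.

Lemma piq_lb N : (1 <= N)%N ->
  ((1 - a) * (1/2 + (1/2) ^+ N) <= piq N) /\ piq N <= 1 - a.
Proof.
elim: N => [//|N IH] _.
case: N IH => [_|N IH].
  rewrite piqS /piq big_geq // mul1r qa expr1 expr1.
  have ha := a_le; split; lra.
have [IH1 IH2] := IH isT.
rewrite piqS; split; last first.
  apply: le_trans IH2; by rewrite ler_piMr ?piq_ge0 // qa lerBlDr lerDl aX_ge0.
rewrite mulrBr mulr1 qa.
have h : piq N.+1 * a ^+ N.+2 <= (1 - a) * ((1/2) ^+ N.+2).
  apply: ler_pM; rewrite ?aX_ge0 ?piq_ge0 ?aX_le //.
have e : (1/2:R) ^+ N.+2 = 1/2 * (1/2) ^+ N.+1 by rewrite exprS.
rewrite e in h *; set y := (1/2) ^+ N.+1 in h IH1 *.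
set P := piq N.+1 in h IH1 IH2 *; set z := P * _ in h *.
have ha := a_le; rewrite !mulrDr in IH1 *.
rewrite (mulrCA _ (1/2) y) in h *. set w := (1 - a) * y in h IH1 *.
lra.
Qed.

Lemma piq_cvg : cvgn piq.
Proof.
apply/cvg_ex; eexists; apply: nonincreasing_cvgn; first exact: piq_nonincr.
by exists 0 => _ [N _ <-]; rewrite piq_ge0.
Qed.

Lemma Kq_le N : Kq R q <= piq N.
Proof. exact: nonincreasing_cvgn_ge piq_nonincr piq_cvg N. Qed.

Lemma piq_ge14 N : 1/4 <= piq N.
Proof.
case: N => [|N]; first by rewrite /piq big_geq //; lra.
have [h _] := @piq_lb N.+1 isT.
have ha := a_le; have hy := aX_ge0 N.+1.
have : 0 <= (1 - a) * (1/2) ^+ N.+1.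
  by rewrite mulr_ge0 ?exprn_ge0 //; lra.
rewrite mulrDr in h; lra.
Qed.

Lemma Kq_gt0 : 0 < Kq R q.
Proof.
have : 1/4 <= Kq R q.
  apply: limr_ge; first exact: piq_cvg.
  by apply: nearW => N; apply: piq_ge14.
lra.
Qed.
End Anal.

Lemma prod_real (R : realType) (q : nat) (hq : (2 <= q)%N) a :
  (((q ^ 'C(a, 2) * \prod_(1 <= i < a.+1) (q ^ i - 1))%N)%:R : R) =
  (q%:R) ^+ (a * a) * piq R q a.
Proof.
have Q0 : (q%:R : R) != 0 by rewrite pnatr_eq0; case: q hq.
elim: a => [|a IH].
  by rewrite big_geq // bin_small // /piq big_geq // expn0 muln1 mul0n expr0 mulr1.
rewrite binS bin1 expnD big_nat_recr //= mulnACA natrM IH piqS natrM.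
rewrite natrB ?expn_gt0 ?(leq_trans _ hq) // !natrX.
have -> : (a.+1 * a.+1 = a * a + a + a.+1)%N by lia.
rewrite !exprD; field.
by rewrite !expf_neq0.
Qed.

Theorem proposition6 (R : realType) (q m n k : nat) (K : finFieldType)
  (HK : #|K| = q) (C : {set 'M[K]_(m, n)})
  (Hnm : (n <= m)%N) (Hk1 : (1 <= k)%N) (Hkn : (k <= n)%N)
  (HC : #|C| = (q ^ (m * k))%N)
  (Hd : min_rank_dist C (n - k + 1)) :
  let t := ((n - k + 1 - 1)./2)%N in
  forall (c : 'M[K]_(m, n)) (u : nat), c \in C ->
    (n - k + 1 - t <= u)%N -> (u <= n)%N ->
    PE R C c t u < (q%:R : R) ^- (t * t) / (Kq R q) ^+ 2.
Proof.
move=> t c u cC _ hun.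
have hq : (2 <= q)%N by rewrite -HK; exact: card_finNzRing_gt1.
pose r := (n - k)%N.
have ht : t = r./2 by rewrite /t /r addnK.
have h2t : (t.*2 <= r)%N.
  by rewrite ht -{2}(odd_double_half r) leq_addl.
have hrm : (r <= m)%N by rewrite (leq_trans (leq_subr k n)).
have hrn : (r <= n)%N by rewrite leq_subr.
have htn : (t <= n)%N by rewrite (leq_trans _ hrn) // (leq_trans _ h2t) // -addnn leq_addr.
have hdist : forall x x' : 'M[K]_(m, n), c + x \in C -> c + x' \in C ->
    x != x' -> (r < \rank (x - x')%R)%N.
  move=> x x' hx hx' hne; have [H1 _] := Hd.
  have := H1 (c + x) (c + x') hx hx'; rewrite (inj_eq (addrI c)) => /(_ hne).
  by rewrite /rk opprD addrACA subrr add0r addn1.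
have hnz : forall x : 'M[K]_(m, n), c + x \in C -> x != 0 -> (r < \rank x)%N.
  by move=> x hx hx0; have := hdist x 0 hx; rewrite addr0 subr0 => /(_ cC hx0).
have Hmain := @main_count K m n r t u C c hdist hnz hrm htn hun Hnm.
rewrite /PE.
set a1 := #|[set e | _ && _]|; set a4 := #|[set e | _ == _]|.
have Hm : (a1 * #|GLs K m| * #|GLs K t| <=
           a4 * (q ^ (m * t) * q ^ (t * n) * q ^ (m * (m - r))))%N.
  by rewrite -HK; exact: Hmain.
have hexp : (q ^ (m * t) * q ^ (t * n) * q ^ (m * (m - r)) <= q ^ (m * m))%N.
  rewrite -!expnD leq_pexp2l ?(leq_trans _ hq) //.
  have h2 : (2 * t <= r)%N by rewrite mul2n.
  have e1 : (m * (m - r) + m * r = m * m)%N by rewrite -mulnDr subnK.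
  rewrite -e1.
  have f1 : (t * n <= m * t)%N by rewrite mulnC leq_mul2r Hnm orbT.
  have f2 : (2 * (m * t) <= m * r)%N by rewrite mulnCA leq_mul2l h2 orbT.
  move: f1 f2; move: (m * t)%N (t * n)%N (m * r)%N (m * (m - r))%N.
  move=> a b c' d; lia.
have a4_gt0 : (0 < a4)%N.
  apply/card_gt0P; exists (pid_mx u); rewrite inE /rk rank_pid_mx //.
  exact: leq_trans hun Hnm.
have Q0 : (0 : R) < q%:R by rewrite ltr0n (leq_trans _ hq).
set Q : R := q%:R in Q0 *.
set pm := piq R q m; set pt := piq R q t.
have pm0 : 0 < pm by apply: piq_gt0.
have pt0 : 0 < pt by apply: piq_gt0.
have HR : (a1%:R * ((Q ^+ (m * m) * pm) * (Q ^+ (t * t) * pt)) <=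
           a4%:R * Q ^+ (m * m) :> R).
  rewrite /Q /pm /pt -!prod_real // -HK -!card_GLs -natrX -!natrM ler_nat HK.
  apply: (leq_trans _ (leq_trans Hm _)); first by rewrite mulnA.
  by rewrite leq_mul2l hexp orbT.
have hB : a1%:R * (pm * (Q ^+ (t * t) * pt)) <= a4%:R :> R.
  rewrite -(ler_pM2r (exprn_gt0 (m * m) Q0)).
  have -> : a1%:R * (pm * (Q ^+ (t * t) * pt)) * Q ^+ (m * m) =
            a1%:R * ((Q ^+ (m * m) * pm) * (Q ^+ (t * t) * pt)) :> R by ring.
  exact: HR.
have a40 : (0 : R) < a4%:R by rewrite ltr0n.
have Kq0 := Kq_gt0 R q hq.
have KqT := Kq_le R q hq t.
have KqM : Kq R q < pm.
  exact: le_lt_trans (Kq_le R q hq m.+1) (piq_lt R q hq m).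
apply: (@le_lt_trans _ _ (pm * (Q ^+ (t * t) * pt))^-1).
  rewrite ler_pdivrMr // mulrC ler_pdivlMr //.
  by rewrite mulr_gt0 // mulr_gt0 // exprn_gt0.
rewrite -invfM ltf_pV2 ?posrE ?mulr_gt0 ?exprn_gt0 ?expr2 //.
have : Kq R q * Kq R q < pm * pt.
  apply: (@le_lt_trans _ _ (Kq R q * pt)); first by rewrite ler_pM2l.
  by rewrite ltr_pM2r.
move=> hK; rewrite [pm * _]mulrCA ltr_pM2l ?exprn_gt0 //.
Qed.
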